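(* It holds that $\Gamma(\mathcal{C}^I)\subseteq\mathcal{F}$.
   Context: Fix $I\in\mathbb{N}$. $\mathcal{C}=\{f\in C(\mathbb{R}_+,\mathbb{R}_+):f(0)=0,f\text{ non-decreasing}\}$, $\mathcal{C}^\uparrow=\{f\in\mathcal{C}:f\text{ strictly increasing},\lim_{u\to\infty}f(u)=\infty\}$. For $\psi\in\mathcal{C}^I$, $\phi_i(u):=u-\sum_{j=1}^I2(i\wedge j)\psi_j(u)$, and $\mathcal{F}:=\{\psi\in\mathcal{C}^I:\phi_I\in\mathcal{C}^\uparrow\}$. For $\bar\psi\in\mathcal{C}^I$, $\gamma_I(z):=z$ and $\gamma_i(z):=z+\sum_{j>i}2(j-i)\bar\psi_j(\gamma_j(z))$ for $i=I-1,\dots,0$ (each $\gamma_i\in\mathcal{C}^\uparrow$, so $\gamma_0^{-1}$ exists); $\Gamma(\bar\psi):=(\bar\psi_i\circ\gamma_i\circ\gamma_0^{-1})_{i=1}^I$. *)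

(* Defs.v *)
(* concrete reals R. Functions R_+ -> R_+ are modelled as
   R -> R functions whose values off [0, +oo) are irrelevant. *)
From Stdlib Require Import Reals Lra Lia List ClassicalEpsilon.
Import ListNotations.
Open Scope R_scope.

Definition lsum (l : list nat) (F : nat -> R) : R :=
  fold_right Rplus 0 (map F l).

Definition cont_nonneg (f : R -> R) : Prop :=
  forall u, 0 <= u -> forall eps, 0 < eps -> exists delta, 0 < delta /\
    forall v, 0 <= v -> Rabs (v - u) < delta -> Rabs (f v - f u) < eps.

Definition inC (f : R -> R) : Prop :=
  cont_nonneg f /\
  (forall u, 0 <= u -> 0 <= f u) /\
  f 0 = 0 /\
  (forall u v, 0 <= u -> u <= v -> f u <= f v).

Definition inCup (f : R -> R) : Prop :=
  inC f /\
  (forall u v, 0 <= u -> u < v -> f u < f v) /\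
  (forall M, exists N, 0 <= N /\ forall u, N <= u -> M < f u).

(* psi : nat -> (R -> R) represents (psi_1, ..., psi_I) (indices 1..I) *)
Definition inCI (I : nat) (psi : nat -> R -> R) : Prop :=
  forall i, (1 <= i <= I)%nat -> inC (psi i).

Definition phi (I : nat) (psi : nat -> R -> R) (i : nat) (u : R) : R :=
  u - lsum (seq 1 I) (fun j => 2 * INR (Nat.min i j) * psi j u).

Definition inF (I : nat) (psi : nat -> R -> R) : Prop :=
  inCI I psi /\ inCup (phi I psi I).

(* gamma with fuel:  gam (S f) i z = z + sum_{j=i+1}^I 2 (j-i) psib_j (gam f j z).
   With fuel I - i this computes the paper's gamma_i (see gamma_rec below). *)
Fixpoint gam (I : nat) (psib : nat -> R -> R) (fuel i : nat) (z : R) : R :=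
  match fuel with
  | O => z
  | S f => z + lsum (seq (S i) (I - i))
                   (fun j => 2 * INR (j - i) * psib j (gam I psib f j z))
  end.

Definition gamma (I : nat) (psib : nat -> R -> R) (i : nat) (z : R) : R :=
  gam I psib (I - i) i z.

(* inverse on [0,+oo) of a function (well defined when f is in C^up):
   some u >= 0 with f u = z *)
Definition inv_nonneg (f : R -> R) (z : R) : R :=
  epsilon (inhabits 0) (fun u => 0 <= u /\ f u = z).

Definition Gamma (I : nat) (psib : nat -> R -> R) : nat -> R -> R :=
  fun i u => psib i (gamma I psib i (inv_nonneg (gamma I psib 0) u)).

Lemma gam_indep I psib f g i z : (I - i <= f)%nat -> (I - i <= g)%nat ->
  gam I psib f i z = gam I psib g i z.
Proof.
  revert g i z. induction f as [|f IH]; intros g i z Hf Hg.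
  - destruct g as [|g]; [reflexivity|]. simpl.
    assert (E : (I - i = 0)%nat) by lia. rewrite E. unfold lsum. simpl. lra.
  - destruct g as [|g].
    + simpl. assert (E : (I - i = 0)%nat) by lia. rewrite E. unfold lsum. simpl. lra.
    + simpl. f_equal. unfold lsum. f_equal.
      apply map_ext_in. intros j Hj. apply in_seq in Hj.
      rewrite (IH g) by lia. reflexivity.
Qed.

Lemma gam_fuel I psib f i z : (I - i <= f)%nat ->
  gam I psib f i z = gamma I psib i z.
Proof. intros H. unfold gamma. apply gam_indep; lia. Qed.

Lemma gamma_I I psib z : gamma I psib I z = z.
Proof. unfold gamma. rewrite Nat.sub_diag. reflexivity. Qed.

Lemma gamma_rec I psib i z : (i < I)%nat ->
  gamma I psib i z =
  z + lsum (seq (S i) (I - i)) (fun j => 2 * INR (j - i) * psib j (gamma I psib j z)).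
Proof.
  intros H. unfold gamma at 1. destruct (I - i)%nat eqn:E; [lia|].
  cbn [gam]. f_equal. rewrite <- E. unfold lsum. f_equal. apply map_ext_in.
  intros j Hj. apply in_seq in Hj. rewrite gam_fuel by lia. reflexivity.
Qed.

(* Main.v *)
Require Import Defs.
From Stdlib Require Import Reals Lra Lia List ClassicalEpsilon.
Open Scope R_scope.

Ltac rabs := unfold Rabs in *; repeat destruct Rcase_abs; lra.

Lemma cont_ext f g : (forall u, 0 <= u -> f u = g u) -> cont_nonneg f -> cont_nonneg g.
Proof.
  intros E C u Hu eps He. destruct (C u Hu eps He) as [d [Hd Hv]].
  exists d; split; auto. intros v Hv0 Hvu. rewrite <- !E by lra. auto.
Qed.

Lemma cont_id : cont_nonneg (fun u => u).
Proof. intros u Hu eps He. exists eps; split; auto. Qed.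

Lemma cont_const c : cont_nonneg (fun _ => c).
Proof. intros u Hu eps He. exists 1; split; [lra|]. intros. rabs. Qed.

Lemma cont_plus f g : cont_nonneg f -> cont_nonneg g -> cont_nonneg (fun u => f u + g u).
Proof.
  intros Cf Cg u Hu eps He.
  destruct (Cf u Hu (eps/2)) as [d1 [Hd1 H1]]; [lra|].
  destruct (Cg u Hu (eps/2)) as [d2 [Hd2 H2]]; [lra|].
  exists (Rmin d1 d2); split; [apply Rmin_pos; auto|].
  intros v Hv Hvu.
  assert (A := H1 v Hv ltac:(pose proof (Rmin_l d1 d2); lra)).
  assert (B := H2 v Hv ltac:(pose proof (Rmin_r d1 d2); lra)).
  rabs.
Qed.

Lemma cont_scal c f : cont_nonneg f -> cont_nonneg (fun u => c * f u).
Proof.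
  intros Cf u Hu eps He.
  assert (Ha : 0 <= Rabs c) by apply Rabs_pos.
  assert (Hp : 0 < eps / (Rabs c + 1)) by (apply Rdiv_lt_0_compat; lra).
  destruct (Cf u Hu _ Hp) as [d [Hd H]].
  exists d; split; auto. intros v Hv Hvu.
  replace (c * f v - c * f u) with (c * (f v - f u)) by ring.
  rewrite Rabs_mult.
  assert (Rabs c * Rabs (f v - f u) <= Rabs c * (eps / (Rabs c + 1))).
  { apply Rmult_le_compat_l; [auto | left; apply H; auto]. }
  replace (Rabs c * (eps / (Rabs c + 1))) with (eps - eps / (Rabs c + 1)) in H0
    by (field; lra).
  lra.
Qed.

Lemma cont_comp f g : cont_nonneg f -> (forall u, 0 <= u -> 0 <= f u) ->
  cont_nonneg g -> cont_nonneg (fun u => g (f u)).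
Proof.
  intros Cf Pf Cg u Hu eps He.
  destruct (Cg (f u) (Pf u Hu) eps He) as [d1 [Hd1 H1]].
  destruct (Cf u Hu d1 Hd1) as [d2 [Hd2 H2]].
  exists d2; split; [auto|]. intros v Hv Hvu. apply H1; auto.
Qed.

Lemma cont_lip f : (forall u v, 0 <= u -> 0 <= v -> Rabs (f v - f u) <= Rabs (v - u)) ->
  cont_nonneg f.
Proof.
  intros L u Hu eps He. exists eps; split; auto. intros v Hv Hvu.
  specialize (L u v Hu Hv). lra.
Qed.

Lemma inC_ext f g : (forall u, 0 <= u -> f u = g u) -> inC f -> inC g.
Proof.
  intros E [C [N [Z M]]]. split; [|split; [|split]].
  - eapply cont_ext; eauto.
  - intros u Hu; rewrite <- E; auto.
  - rewrite <- E; auto; lra.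
  - intros u v Hu Huv; rewrite <- !E; auto; lra.
Qed.

Lemma inC_comp f g : inC f -> inC g -> inC (fun u => g (f u)).
Proof.
  intros [Cf [Nf [Zf Mf]]] [Cg [Ng [Zg Mg]]]. split; [|split; [|split]].
  - apply cont_comp; auto.
  - intros; apply Ng; auto.
  - rewrite Zf; auto.
  - intros u v Hu Huv. apply Mg; auto.
Qed.

Lemma inC_plus f g : inC f -> inC g -> inC (fun u => f u + g u).
Proof.
  intros [Cf [Nf [Zf Mf]]] [Cg [Ng [Zg Mg]]]. split; [|split; [|split]].
  - apply cont_plus; auto.
  - intros u Hu; specialize (Nf u Hu); specialize (Ng u Hu); lra.
  - rewrite Zf, Zg; lra.
  - intros u v Hu Huv. specialize (Mf u v Hu Huv); specialize (Mg u v Hu Huv); lra.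
Qed.

Lemma inC_scal c f : 0 <= c -> inC f -> inC (fun u => c * f u).
Proof.
  intros Hc [Cf [Nf [Zf Mf]]]. split; [|split; [|split]].
  - apply cont_scal; auto.
  - intros u Hu; apply Rmult_le_pos; auto.
  - rewrite Zf; ring.
  - intros u v Hu Huv. apply Rmult_le_compat_l; auto.
Qed.

Lemma inC_zero : inC (fun _ => 0).
Proof.
  split; [apply cont_const|]. split; [intros; lra|]. split; [auto|]. intros; lra.
Qed.

Lemma inC_lsum (l : list nat) (G : nat -> R -> R) :
  (forall j, In j l -> inC (G j)) -> inC (fun z => lsum l (fun j => G j z)).
Proof.
  induction l as [|a l IH]; intros H.
  - apply inC_zero.
  - apply inC_ext with (fun z => G a z + lsum l (fun j => G j z)); [intros; reflexivity|].
    apply inC_plus.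
    + apply H; simpl; auto.
    + apply IH; intros j Hj; apply H; simpl; auto.
Qed.

Lemma lsum_ext l F G : (forall j, In j l -> F j = G j) -> lsum l F = lsum l G.
Proof. intros H. unfold lsum. f_equal. apply map_ext_in. auto. Qed.

Definition Pg (g : R -> R) := inC g /\ forall u v, 0 <= u -> u <= v -> v - u <= g v - g u.

Lemma Pg_ext f g : (forall u, 0 <= u -> f u = g u) -> Pg f -> Pg g.
Proof.
  intros E [C L]. split; [eapply inC_ext; eauto|].
  intros u v Hu Huv. rewrite <- !E by lra. auto.
Qed.

Lemma Pg_plus_id S : inC S -> Pg (fun z => z + S z).
Proof.
  intros HS. split.
  - apply inC_plus; auto. split; [apply cont_id|]. split; [auto|]. split; [auto|]. auto.
  - destruct HS as [_ [_ [_ M]]]. intros u v Hu Huv. specialize (M u v Hu Huv). lra.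
Qed.

Lemma Pg_id : Pg (fun z => z).
Proof.
  apply Pg_ext with (fun z => z + 0); [intros; ring|]. apply (Pg_plus_id (fun _ => 0)).
  apply inC_zero.
Qed.

Lemma gamma_P I psib : inCI I psib -> forall i, Pg (gamma I psib i).
Proof.
  intros H.
  assert (K : forall n i, (I - i <= n)%nat -> Pg (gamma I psib i)).
  { induction n as [|n IH]; intros i Hi.
    - unfold gamma. replace (I - i)%nat with 0%nat by lia. exact Pg_id.
    - destruct (Compare_dec.le_lt_dec I i) as [Hle|Hlt].
      + unfold gamma. replace (I - i)%nat with 0%nat by lia. exact Pg_id.
      + apply Pg_ext with (fun z => z + lsum (seq (S i) (I - i))
            (fun j => 2 * INR (j - i) * psib j (gamma I psib j z))).
        { intros u _. symmetry. apply gamma_rec; auto. }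
        apply Pg_plus_id. apply inC_lsum. intros j Hj. apply in_seq in Hj.
        apply inC_scal; [apply Rmult_le_pos; [lra| apply pos_INR]|].
        apply (inC_comp (gamma I psib j) (psib j)).
        * apply IH. lia.
        * apply H. lia. }
  intros i. apply (K (I - i)%nat). lia.
Qed.

Lemma Pg_surj g : Pg g -> forall y, 0 <= y -> exists u, 0 <= u /\ g u = y.
Proof.
  intros [[C [N [Z M]]] L] y Hy.
  assert (Hc : continuity (fun x => g (Rmax 0 x) - y)).
  { intros x. unfold continuity_pt, continue_in, limit1_in, limit_in. simpl.
    unfold R_dist. intros eps He.
    assert (H0 : 0 <= Rmax 0 x) by apply Rmax_l.
    destruct (C _ H0 eps He) as [d [Hd Hv]].
    exists d; split; auto. intros v [_ Hvx].
    replace (g (Rmax 0 v) - y - (g (Rmax 0 x) - y)) with (g (Rmax 0 v) - g (Rmax 0 x)) by ring.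
    apply Hv; [apply Rmax_l|].
    unfold Rmax; destruct (Rle_dec 0 v); destruct (Rle_dec 0 x); rabs. }
  destruct (IVT_cor _ 0 y Hc Hy) as [z [Hz Ez]].
  - rewrite Rmax_left by lra. rewrite (Rmax_right 0 y) by lra. rewrite Z.
    specialize (L 0 y ltac:(lra) Hy). rewrite Z in L.
    assert (0 <= g y - y) by lra. nra.
  - exists z. split; [lra|]. rewrite Rmax_right in Ez by lra. lra.
Qed.

Lemma gamma0_eq I psib z :
  gamma I psib 0 z = z + lsum (seq 1 I) (fun j => 2 * INR j * psib j (gamma I psib j z)).
Proof.
  destruct I as [|I].
  - unfold gamma, lsum. simpl. ring.
  - rewrite gamma_rec by lia. f_equal. rewrite Nat.sub_0_r. apply lsum_ext.
    intros j _. rewrite Nat.sub_0_r. reflexivity.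
Qed.

Lemma inCup_ext f g : (forall u, 0 <= u -> f u = g u) -> inCup f -> inCup g.
Proof.
  intros E [C [S U]]. split; [eapply inC_ext; eauto|]. split.
  - intros u v Hu Huv. rewrite <- !E by lra. auto.
  - intros M. destruct (U M) as [N [HN HU]]. exists N; split; auto.
    intros u Hu. rewrite <- E by lra. auto.
Qed.

Theorem proposition3p6 (I : nat) (psib : nat -> R -> R) :
  inCI I psib -> inF I (Gamma I psib).
Proof.
  intros H. pose proof (gamma_P I psib H 0) as HP.
  set (g0 := gamma I psib 0) in *.
  set (gi := inv_nonneg g0).
  assert (Hinv : forall z, 0 <= z -> 0 <= gi z /\ g0 (gi z) = z).
  { intros z Hz. unfold gi, inv_nonneg.
    apply (epsilon_spec (inhabits 0) (fun u => 0 <= u /\ g0 u = z)).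
    apply Pg_surj; auto. }
  destruct HP as [[C0 [N0 [Z0 M0]]] L0].
  assert (Hmono : forall z z', 0 <= z -> z <= z' -> 0 <= gi z' - gi z <= z' - z).
  { intros z z' Hz Hzz. destruct (Hinv z Hz) as [A1 B1].
    destruct (Hinv z' ltac:(lra)) as [A2 B2].
    destruct (Rle_or_lt (gi z) (gi z')) as [Hle|Hlt].
    - specialize (L0 _ _ A1 Hle). lra.
    - specialize (L0 _ _ A2 (Rlt_le _ _ Hlt)). lra. }
  assert (Hgi : inC gi).
  { split; [|split; [|split]].
    - apply cont_lip. intros u v Hu Hv.
      destruct (Rle_or_lt u v).
      + specialize (Hmono u v Hu H0). rabs.
      + specialize (Hmono v u Hv ltac:(lra)). rabs.
    - intros u Hu; apply Hinv; auto.
    - destruct (Hinv 0 ltac:(lra)) as [A B].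
      specialize (L0 0 (gi 0) ltac:(lra) A). lra.
    - intros u v Hu Huv. specialize (Hmono u v Hu Huv). lra. }
  split.
  - intros i Hi. unfold Gamma.
    apply (inC_comp gi (fun z => psib i (gamma I psib i z))); auto.
    apply (inC_comp (gamma I psib i) (psib i)).
    + apply (gamma_P I psib H i).
    + apply H; auto.
  - apply inCup_ext with gi.
    { intros u Hu. unfold phi, Gamma.
      rewrite (lsum_ext _ _ (fun j => 2 * INR j * psib j (gamma I psib j (gi u)))).
      2:{ intros j Hj. apply in_seq in Hj. rewrite Nat.min_r by lia. reflexivity. }
      destruct (Hinv u Hu) as [_ B]. unfold g0 in B. rewrite gamma0_eq in B.
      fold g0. fold gi. lra. }
    split; [auto|]. split.
    + intros u v Hu Huv. destruct (Hinv u Hu) as [A1 B1].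
      destruct (Hinv v ltac:(lra)) as [A2 B2].
      destruct (Rlt_or_le (gi u) (gi v)) as [Hl|Hl]; auto.
      specialize (M0 _ _ A2 Hl). lra.
    + intros M. assert (HM : 0 <= Rabs M + 1) by (pose proof (Rabs_pos M); lra).
      exists (g0 (Rabs M + 1) + 1). split.
      { specialize (L0 0 _ ltac:(lra) HM). lra. }
      intros u Hu.
      assert (Hu0 : 0 <= u).
      { specialize (L0 0 _ ltac:(lra) HM). lra. }
      destruct (Hinv u Hu0) as [A B].
      destruct (Rlt_or_le M (gi u)) as [Hl|Hl]; auto.
      assert (gi u <= Rabs M + 1) by (pose proof (Rle_abs M); lra).
      specialize (M0 _ _ A H0). lra.
Qed.
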